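(* Let $\mathcal{C}_f$ be a CRN stably computing $f:\mathbb{N}^d\to\mathbb{N}$ such that for every CRN $\mathcal{C}_g$ stably computing a function $g:\mathbb{N}\to\mathbb{N}$, the concatenated CRN $\mathcal{C}_{g\circ f}$ stably computes $g\circ f$. Then the CRN obtained from $\mathcal{C}_f$ by removing every reaction that has the output species of $\mathcal{C}_f$ as a reactant (which is output-oblivious) still stably computes $f$.
   Context: A chemical reaction network (CRN) is a pair $(\mathcal{S},\mathcal{R})$ of a finite set of species and a finite set of reactions $(\vec{R},\vec{P})\in\mathbb{N}^{\mathcal{S}}\times\mathbb{N}^{\mathcal{S}}$. A configuration is $\vec{C}\in\mathbb{N}^{\mathcal{S}}$; a reaction is applicable if $\vec{R}\le\vec{C}$ and yields $\vec{C}-\vec{R}+\vec{P}$; reachability is via finite sequences of applicable reactions. To compute $h:\mathbb{N}^k\to\mathbb{N}$ a CRN has input species $X_1,\ldots,X_k$, output species $Y$, leader species $L$; the initial configuration $\vec{I}_{\vec{x}}$ has $\vec{x}(i)$ copies of $X_i$, one $L$, nothing else. $\vec{C}$ is stable if all configurations reachable from it have the same count of $Y$. The CRN stably computes $h$ if for every $\vec{x}$ and every $\vec{C}$ reachable from $\vec{I}_{\vec{x}}$ some stable $\vec{O}$ reachable from $\vec{C}$ has $\vec{O}(Y)=h(\vec{x})$. A CRN is output-oblivious if its output species is never a reactant. The concatenated CRN $\mathcal{C}_{g\circ f}$ is obtained by taking the union of the species and reactions of $\mathcal{C}_f$ and $\mathcal{C}_g$, where the output species of $\mathcal{C}_f$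 is identified with the input species of $\mathcal{C}_g$ and all other species are disjoint; with leaders $L^f$, $L^g$ of $\mathcal{C}_f$, $\mathcal{C}_g$, a new leader $L$ and the reaction $L\to L^f+L^g$ are added. Its inputs are those of $\mathcal{C}_f$, its output is that of $\mathcal{C}_g$. *)

(* Defs.v *)
From Stdlib Require Import Relations List.
From mathcomp Require Import all_boot.

Unset Strict Implicit.
Unset Printing Implicit Defensive.

(* A reaction over a finite species type S: (reactant vector, product vector). *)
Definition reaction (S : finType) := ((S -> nat) * (S -> nat))%type.

Definition config (S : finType) := S -> nat.

Definition applicable {S : finType} (r : reaction S) (c : config S) : Prop :=
  forall s, r.1 s <= c s.

Definition step {S : finType} (R : seq (reaction S)) (c c' : config S) : Prop :=
  exists r, List.In r R /\ applicable r c /\ forall s, c' s = c s - r.1 s + r.2 s.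

Definition reachable {S : finType} (R : seq (reaction S)) : relation (config S) :=
  clos_refl_trans (config S) (step R).

Record fcrn (k : nat) := FCRN {
  species : finType;
  reactions : seq (reaction species);
  inputs : 'I_k -> species;
  output : species;
  leader : species }.
Arguments species {k}.
Arguments reactions {k}.
Arguments inputs {k}.
Arguments output {k}.
Arguments leader {k}.
Arguments FCRN {k}.

Definition well_formed {k} (C : fcrn k) : Prop :=
  injective (inputs C) /\
  (forall i, inputs C i <> leader C) /\
  (forall i, inputs C i <> output C) /\
  output C <> leader C.

Definition init_config k (C : fcrn k) (x : 'I_k -> nat) : config (species C) :=
  fun s => (\sum_(i < k | inputs C i == s) x i) + (s == leader C).

Definition stable {k} (C : fcrn k) (c : config (species C)) : Prop :=
  forall c', reachable (reactions C) c c' -> c' (output C) = c (output C).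

Definition stably_computes {k} (C : fcrn k) (h : ('I_k -> nat) -> nat) : Prop :=
  forall x c, reachable (reactions C) (init_config k C x) c ->
    exists o, reachable (reactions C) c o /\ stable C o /\ o (output C) = h x.

Definition output_oblivious {k} (C : fcrn k) : Prop :=
  forall r, List.In r (reactions C) -> r.1 (output C) = 0.

Definition remove_output_reactions {k} (C : fcrn k) : fcrn k :=
  FCRN (species C) [seq r <- reactions C | r.1 (output C) == 0]
        (inputs C) (output C) (leader C).

(* Concatenation C_{g o f}.  Species: a fresh leader (None), the species of
   C_f, and the species of C_g other than its input X^g, which is identified
   with the output Y^f of C_f. *)
Section Concat.
Variables (d : nat) (Cf : fcrn d) (Cg : fcrn 1).

Definition gsp := {s : species Cg | s != inputs Cg ord0}.
Definition cspecies : finType := option (species Cf + gsp)%type.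

Definition embf (s : species Cf) : cspecies := Some (inl s).
Definition embg (s : species Cg) : cspecies :=
  match (insub s : option gsp) with
  | Some s' => Some (inr s')
  | None => Some (inl (output Cf))
  end.

Definition pushv {A : finType} (e : A -> cspecies) (v : A -> nat) : cspecies -> nat :=
  fun t => \sum_(a | e a == t) v a.

Definition push_reaction {A : finType} (e : A -> cspecies) (r : reaction A)
  : reaction cspecies := (pushv e r.1, pushv e r.2).

Definition leader_reaction : reaction cspecies :=
  (fun t => nat_of_bool (t == None),
   fun t => nat_of_bool (t == embf (leader Cf)) + nat_of_bool (t == embg (leader Cg))).

Definition concat : fcrn d :=
  FCRN cspecies
    (map (push_reaction embf) (reactions Cf) ++
     map (push_reaction embg) (reactions Cg) ++ [:: leader_reaction])
    (fun i => embf (inputs Cf i)) (embg (output Cg)) None.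
End Concat.
Arguments concat {d}.

(* Main.v *)
Require Import Defs.
From Stdlib Require Import Relations FunctionalExtensionality Lia.
From mathcomp Require Import all_boot zify.
Unset Strict Implicit.
Unset Printing Implicit Defensive.


Definition X3 : 'I_3 := Ordinal (isT : 0 < 3).
Definition Y3 : 'I_3 := Ordinal (isT : 1 < 3).
Definition L3 : 'I_3 := Ordinal (isT : 2 < 3).
Definition conv : reaction 'I_3 :=
  (fun s => nat_of_bool (s == X3), fun s => nat_of_bool (s == Y3)).
Definition Cg : fcrn 1 := FCRN 'I_3 [:: conv] (fun _ => X3) Y3 L3.

Lemma wf_Cg : well_formed Cg.
Proof.
split; first by move=> i j _; rewrite (ord1 i) (ord1 j).
by split; [|split]; move=> //= *; move/(congr1 val).
Qed.

Lemma Cg_noX c c' : c X3 = 0 -> reachable (reactions Cg) c c' -> c' = c.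
Proof.
move=> H0 /clos_rt_rt1n_iff R; inversion R as [|y z w St]; first by [].
subst. match goal with H : step _ _ _ |- _ => move: H end. case => r [/= [Er|//] [Ha _]]; subst r.
by move: (Ha X3); rewrite /= H0.
Qed.

Lemma Cg_fire n c : c X3 = n ->
  reachable (reactions Cg) c (fun s => if s == X3 then 0 else if s == Y3 then c Y3 + n else c s).
Proof.
elim: n c => [|n IH] c Hc.
  have -> : (fun s => if s == X3 then 0 else if s == Y3 then c Y3 + 0 else c s) = c.
    apply: functional_extensionality => s /=. case: (s =P X3) => [->//|_]; case: (s =P Y3) => [->|//]; by rewrite addn0.
  exact: rt_refl.
pose c1 := fun s => c s - (s == X3) + (s == Y3).
apply: rt_trans (_ : reachable _ c1 _).
  apply: rt_step; exists conv; split; first by left.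
  by split => // s /=; case: eqP => [->|]; rewrite ?Hc.
have -> : (fun s => if s == X3 then 0 else if s == Y3 then c Y3 + n.+1 else c s) =
  (fun s => if s == X3 then 0 else if s == Y3 then c1 Y3 + n else c1 s).
  apply: functional_extensionality => s /=; rewrite /c1.
  case: (s =P X3) => [//|/eqP nX].
  case: ifP => [/eqP E|nY]; [subst s => /=|]; first by rewrite subn0 addn1 addSnnS.
  by rewrite subn0 addn0.
by apply: IH; rewrite /c1 /= Hc subn1 addn0.
Qed.

Lemma Cg_computes : stably_computes Cg (fun x => id (x ord0)).
Proof.
move=> x c R.
have inv : c X3 + c Y3 = x ord0.
  have : forall c', reachable (reactions Cg) (init_config 1 Cg x) c' -> c' X3 + c' Y3 = x ord0.
    move=> c' /clos_rt_rtn1_iff R'.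
    induction R' as [|y z St _ IH].
      by rewrite /init_config /= !big_mkcond !big_ord1 /= big_mkcond big_ord1 /= !addn0.
    case: St => r [/= [<-|//] [Ha E]].
    rewrite !E /= -IH addn0.
    move: (Ha X3) => /=; lia.
  by apply.
exists (fun s => if s == X3 then 0 else if s == Y3 then c Y3 + c X3 else c s).
split; first exact: Cg_fire.
split; last by rewrite /= addnC.
by move=> c' /Cg_noX ->.
Qed.


Lemma In_cat (A : Type) (x : A) s1 s2 : List.In x (s1 ++ s2) <-> List.In x s1 \/ List.In x s2.
Proof. elim: s1 => [|a s IH] /=; tauto. Qed.

Lemma In_map (A B : Type) (f : A -> B) y s : List.In y (map f s) <-> exists x, f x = y /\ List.In x s.
Proof.
elim: s => [|a s IH] /=; first by split=> [[]|[x [_ []]]].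
split.
- case=> [<-|/IH [x [E H]]]; [by exists a; auto | by exists x; auto].
- case=> x [E [->|H]]; [by left | right; apply/IH; by exists x].
Qed.

Lemma In_filter (A : Type) (P : pred A) x s : List.In x (filter P s) <-> List.In x s /\ P x.
Proof.
elim: s => [|a s IH] /=; first by intuition.
case: ifP => Pa /=.
- split; [case=> [<-|/IH [? ?]]; auto | case=> [[<-|?] ?]; [by left| right; apply/IH; auto]].
- split; [move/IH=> [? ?]; auto | case=> [[E|?] Px]; [subst; by rewrite Px in Pa | apply/IH; auto]].
Qed.

Section Main.
Variables (d : nat) (Cf : fcrn d).
Notation S := (species Cf).
Notation T := (cspecies d Cf Cg).
Notation ef := (embf d Cf Cg).
Notation eg := (embg d Cf Cg).
Notation pv := (pushv d Cf Cg).
Notation Yf := (output Cf).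

Lemma pushv_in (A : finType) (e : A -> T) (v : A -> nat) a :
  injective e -> pv e v (e a) = v a.
Proof.
move=> inj; rewrite /pv (eq_bigl (pred1 a)) ?big_pred1_eq // => b.
by rewrite /= (inj_eq inj).
Qed.

Lemma pushv_out (A : finType) (e : A -> T) (v : A -> nat) t :
  (forall a, e a != t) -> pv e v t = 0.
Proof. by move=> H; rewrite /pushv big_pred0 // => a; rewrite (negbTE (H a)). Qed.


Lemma embf_inj : injective (embf d Cf Cg).
Proof. by move=> a b [->]. Qed.

Definition gY : gsp Cg := exist _ Y3 isT.
Definition gL : gsp Cg := exist _ L3 isT.
Definition yg : T := Some (inr gY).

Lemma embg_X : eg X3 = ef Yf.
Proof. by rewrite /embg insubN. Qed.

Lemma embg_val (g : gsp Cg) : eg (val g) = Some (inr g).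
Proof. by rewrite /embg valK. Qed.

Lemma embg_inj : injective (eg).
Proof.
move=> a b; rewrite /embg.
case: insubP => [u _ <-|/negPn/eqP ->]; case: insubP => [v _ <-|/negPn/eqP ->] //=.
by case=> ->.
Qed.

Lemma pushv_embf (v : S -> nat) (t : T) :
  pv (ef) v t = match t with Some (inl s) => v s | _ => 0 end.
Proof.
case: t => [[s|g]|]; first by apply: pushv_in; exact: embf_inj.
all: by apply: pushv_out.
Qed.

Lemma pushv_embg (v : 'I_3 -> nat) (t : T) :
  pv (eg) v t =
  match t with None => 0 | Some (inl s) => if s == Yf then v X3 else 0
  | Some (inr g) => v (val g) end.
Proof.
case: t => [[s|g]|].
- case: eqP => [->|/eqP ne].
    by have := @pushv_in _ eg v X3 embg_inj; rewrite embg_X.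
  apply: pushv_out => a; rewrite /embg; case: insubP => [u _ _|_] //.
  by apply/eqP => -[] /eqP; rewrite eq_sym (negbTE ne).
- by have := @pushv_in _ eg v (val g) embg_inj; rewrite embg_val.
- by apply: pushv_out => a; rewrite /embg; case: insubP.
Qed.


Definition lift (c : config S) (k : nat) : config T := fun t =>
  match t with None => 0 | Some (inl s) => c s
  | Some (inr g) => if val g == Y3 then k else 1 end.
Definition upd (c : config S) (n : nat) : config S := fun s => if s == Yf then n else c s.
Notation CR := (reactions (Defs.concat Cf Cg)).
Notation FR := (reactions Cf).

Lemma gX (g : gsp Cg) : (val g == X3) = false.
Proof. exact: negbTE (valP g). Qed.

Lemma step_lift_inv c k z : step CR (lift c k) z ->
  (exists r, List.In r FR /\ applicable r c /\ z = lift (fun s => c s - r.1 s + r.2 s) k)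
  \/ (0 < c Yf /\ z = lift (upd c (c Yf - 1)) k.+1).
Proof.
case=> r [Hin [Ha E]].
simpl in Hin; apply In_cat in Hin; destruct Hin as [Hin|Hin].
  apply In_map in Hin; destruct Hin as [r0 [Er Hr0]]; subst.
  2: destruct Hin as [Er|[Er|[]]].
  all: subst.
- left; exists r0; split=>//; split.
  + by move=> s; move: (Ha (ef s)); rewrite /= pushv_embf.
  + apply: functional_extensionality => t; rewrite E /= !pushv_embf.
    by case: t => [[s|g]|] /=; rewrite ?subn0 ?addn0.
- right; split.
  + by move: (Ha (ef Yf)); rewrite /= pushv_embg /= eqxx.
  + apply: functional_extensionality => t; rewrite E /= !pushv_embg.
    case: t => [[s|g]|] //=.
    * rewrite /upd; case: (s =P Yf) => [->|_] /=; lia.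
    * rewrite gX; case: (val g == Y3) => /=; lia.
- by move: (Ha None) => /=.
Qed.

Lemma sim_f r c k : List.In r FR -> applicable r c ->
  step CR (lift c k) (lift (fun s => c s - r.1 s + r.2 s) k).
Proof.
move=> Hr Ha; exists (push_reaction d Cf Cg ef r); split.
  by apply/In_cat; left; apply/In_map; exists r.
split.
  by move=> t; rewrite /= pushv_embf; case: t => [[s|g]|] //=.
by move=> t; rewrite /= !pushv_embf; case: t => [[s|g]|] /=; rewrite ?subn0 ?addn0.
Qed.

Lemma sim_conv c k : 0 < c Yf -> step CR (lift c k) (lift (upd c (c Yf - 1)) k.+1).
Proof.
move=> Hc; exists (push_reaction d Cf Cg eg conv); split.
  apply/In_cat; right; apply/In_cat; left; apply/In_map; exists conv; split=> //; by left.
split.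
  move=> t; rewrite /= pushv_embg; case: t => [[s|g]|] //=.
  - by case: (s =P Yf) => [->|_].
  - by rewrite gX.
move=> t; rewrite /= !pushv_embg; case: t => [[s|g]|] //=.
- rewrite /upd; case: (s =P Yf) => [->|_] /=; lia.
- rewrite gX; case: (val g == Y3) => /=; lia.
Qed.

Lemma leader_step x : step CR (init_config d (Defs.concat Cf Cg) x) (lift (init_config d Cf x) 0).
Proof.
have eL : eg L3 = Some (inr gL) := embg_val gL.
exists (leader_reaction d Cf Cg); split.
  by apply/In_cat; right; apply/In_cat; right; left.
split.
  by move=> t; rewrite /init_config /=; apply: leq_addl.
move=> t; rewrite /init_config /= eL; case: t => [[s|g]|] /=.
- rewrite -[Some (inl s)]/(ef s) (inj_eq embf_inj) addn0 subn0 addn0.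
  by congr (_ + _); apply: eq_bigl => i; rewrite (inj_eq embf_inj).
- rewrite big_pred0 //.
  by case: g => [[[|[|[|n]]] Hn] Hg].
- by rewrite big_pred0.
Qed.
End Main.

Section Paths.
Variables (d : nat) (Cf : fcrn d).
Notation S := (species Cf).
Notation Yf := (output Cf).
Notation CR := (reactions (Defs.concat Cf Cg)).
Notation FR := (reactions Cf).
Notation PR := (reactions (remove_output_reactions Cf)).
Notation lft := (lift d Cf).
Notation up := (upd d Cf).
Notation yG := (yg d Cf).

Lemma lift_reach_C' c c' k : reachable PR c c' -> reachable CR (lft c k) (lft c' k).
Proof.
elim=> [a b [r [Hin [Ha E]]]| a | a b e _ IH1 _ IH2].
- move/In_filter: Hin => [Hin _].
  have -> : b = (fun s => a s - r.1 s + r.2 s) by apply: functional_extensionality.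
  by apply: rt_step; apply: sim_f.
- exact: rt_refl.
- exact: rt_trans IH1 IH2.
Qed.

Lemma conv_all n c k : c Yf = n -> reachable CR (lft c k) (lft (up c 0) (k + n)).
Proof.
elim: n c k => [|n IH] c k Hc.
  have -> : up c 0 = c.
    by apply: functional_extensionality => s; rewrite /upd; case: (s =P Yf) => [->|].
  by rewrite addn0; apply: rt_refl.
have St := @sim_conv d Cf c k (ltac:(by rewrite Hc)).
apply: rt_trans (rt_step _ _ _ _ St) _.
have -> : up c 0 = up (up c (c Yf - 1)) 0.
  by apply: functional_extensionality => s; rewrite /upd; case: (s =P Yf).
rewrite -addSnnS; apply: IH.
by rewrite /upd eqxx Hc subn1.
Qed.

Lemma lift_mono c k o : reachable CR (lft c k) o -> k <= o yG.
Proof.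
move/clos_rt_rt1n_iff; move Ez: (lft c k) => z R.
elim: R c k Ez => [z0|z0 z1 z2 St _ IH] c k Ez; subst.
  by rewrite /= /lift /=.
case: (step_lift_inv _ _ _ _ _ St) => [[r [_ [_ E]]]|[_ E]].
  exact: (IH _ _ (esym E)).
by apply: ltnW; apply: (IH _ _ (esym E)).
Qed.

End Paths.

Lemma rtt {A : Type} {R : relation A} {a b c : A} :
  clos_refl_trans A R a b -> clos_refl_trans A R b c -> clos_refl_trans A R a c.
Proof. exact: rt_trans. Qed.
Lemma rts {A : Type} {R : relation A} {a b : A} : R a b -> clos_refl_trans A R a b.
Proof. exact: rt_step. Qed.

Section Final.
Variables (d : nat) (Cf : fcrn d) (f : ('I_d -> nat) -> nat) (x : 'I_d -> nat).
Hypothesis Hc : stably_computes (Defs.concat Cf Cg) (fun x => id (f x)).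
Notation S := (species Cf).
Notation Yf := (output Cf).
Notation CR := (reactions (Defs.concat Cf Cg)).
Notation FR := (reactions Cf).
Notation PR := (reactions (remove_output_reactions Cf)).
Notation lft := (lift d Cf).
Notation up := (upd d Cf).
Notation yG := (yg d Cf).
Notation I0 := (init_config d Cf x).

Definition Good (p : config S) := exists e, reachable PR p e /\ e Yf = f x.

Lemma iota_reach p : reachable PR I0 p ->
  reachable CR (init_config d (Defs.concat Cf Cg) x) (lft (up p 0) (p Yf)).
Proof.
move=> R.
apply: rtt (rt_step _ _ _ _ (leader_step _ _ x)) _.
apply: rtt (lift_reach_C' _ _ _ _ 0 R) _.
exact: (conv_all _ _ _ _ 0).
Qed.

Lemma out_concat : output (Defs.concat Cf Cg) = yG.
Proof. exact: (embg_val d Cf gY). Qed.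

Lemma bound p : reachable PR I0 p -> p Yf <= f x.
Proof.
move=> R; have [o [Ro [_ Eo]]] := Hc x _ (iota_reach _ R).
rewrite out_concat in Eo.
by have := lift_mono _ _ _ _ _ Ro; rewrite Eo.
Qed.

Lemma mono_PR p e : reachable PR p e -> p Yf <= e Yf.
Proof.
elim=> [a b [r [Hin [Ha E]]]|a|a b e' _ h1 _ h2] //.
- by move/In_filter: Hin => [_ /eqP H0]; rewrite E H0 subn0 leq_addr.
- exact: leq_trans h1 h2.
Qed.

Lemma inner p0 : reachable PR I0 p0 ->
  (forall p, reachable PR I0 p -> f x - p Yf < f x - p0 Yf -> Good p) ->
  forall z o, clos_refl_trans_1n _ (step CR) z o -> o yG = f x ->
  forall c k, z = lft c k -> reachable PR p0 (up c (c Yf + k)) -> p0 Yf <= k ->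
  Good (up c (c Yf + k)).
Proof.
move=> R0 IHo z o R; elim: R => [z0|z0 z1 z2 St _ IH] Eo c k Ez Rp Hk; subst.
- have Hb := bound _ (rtt R0 Rp).
  rewrite /upd eqxx in Hb.
  rewrite /lift /= in Eo.
  exists (up c (c Yf + k)); split; first exact: rt_refl.
  rewrite /upd eqxx; lia.
- case: (step_lift_inv _ _ _ _ _ St) => [[r [Hr [Ha E]]]|[Hpos E]].
  + case: (eqVneq (r.1 Yf) 0) => H0.
    * set c' := (fun s => c s - r.1 s + r.2 s).
      have St' : step PR (up c (c Yf + k)) (up c' (c' Yf + k)).
        exists r; split; first by apply/In_filter; split=> //; apply/eqP.
        split.
          move=> s; rewrite /upd; case: eqP => [Es|_]; [subst s; by rewrite H0 | exact: Ha].
        move=> s; rewrite /upd /c'; case: eqP => [Es|_] //; subst s; by rewrite H0 !subn0 addnAC.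
      have [e [Re Ee]] := IH Eo c' k E (rtt Rp (rts St')) Hk.
      exists e; split=> //; exact: rtt (rts St') Re.
    * apply: IHo; first exact: rtt R0 Rp.
      have Hb := bound _ (rtt R0 Rp).
      rewrite /upd eqxx in Hb.
      have := Ha Yf; move/eqP: H0; rewrite /upd eqxx; lia.
  + have EQ : up c (c Yf + k) = up (up c (c Yf - 1)) ((up c (c Yf - 1)) Yf + k.+1).
      apply: functional_extensionality => s; rewrite /upd eqxx; case: (s == Yf) => //; by rewrite addnS -addSn subn1 prednK.
    rewrite EQ in Rp *; apply: (IH Eo _ _ E Rp); exact: leqW Hk.
Qed.

Lemma outer n : forall p, f x - p Yf < n -> reachable PR I0 p -> Good p.
Proof.
elim: n => [//|n IHn] p Hn Rp.
have [o [Ro [_ Eo]]] := Hc x _ (iota_reach _ Rp).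
rewrite out_concat in Eo.
have EQ : up (up p 0) (up p 0 Yf + p Yf) = p.
  apply: functional_extensionality => s; rewrite /upd eqxx.
  by case: (s =P Yf) => [Es|]; [subst s|].
have H := inner _ Rp _ _ _ (clos_rt_rt1n _ _ _ _ Ro) Eo (up p 0) (p Yf) erefl.
rewrite EQ in H; apply: H => //; last exact: rt_refl.
move=> p' R' H'; apply: IHn R'; lia.
Qed.

End Final.

Theorem lemma3 (d : nat) (Cf : fcrn d) (f : ('I_d -> nat) -> nat) :
  well_formed Cf ->
  stably_computes Cf f ->
  (forall (Cg : fcrn 1) (g : nat -> nat),
      well_formed Cg ->
      stably_computes Cg (fun x => g (x ord0)) ->
      stably_computes (concat Cf Cg) (fun x => g (f x))) ->
  output_oblivious (remove_output_reactions Cf) /\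
  stably_computes (remove_output_reactions Cf) f.
Proof.
move=> wf Hf Hcomp.
have Hc := Hcomp Cg id wf_Cg Cg_computes.
split.
  by move=> r /In_filter [_ /eqP].
move=> x c Rc.
have [e [Re Ee]] := @outer d Cf f x Hc (f x - c (output Cf)).+1 c (ltnSn _) Rc.
exists e; split=> //; split=> //.
move=> e' Re'; apply/eqP; rewrite eqn_leq; apply/andP; split.
  by rewrite Ee; apply: (@bound d Cf f x Hc); apply: rtt Rc (rtt Re Re').
exact: mono_PR Re'.
Qed.
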